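(* A quasivariety $\mathsf{K}$ has the weak ES property if and only if for every finitely generated $\mathbf{B}\in\mathsf{K}$ and every subalgebra $\mathbf{A}\leq\mathbf{B}$ that is full in $\mathsf{K}$, at least one of the following holds: (i) there are two distinct $\theta,\phi\in\mathrm{Con}_{\mathsf{K}}(\mathbf{B})$ with $\theta{\upharpoonright}_A=\phi{\upharpoonright}_A$; (ii) there are two distinct embeddings $g,h\colon\mathbf{B}\to\mathbf{C}$ with $\mathbf{C}\in\mathsf{K}_{\mathrm{RSI}}$ such that $g{\upharpoonright}_A=h{\upharpoonright}_A$. Moreover, whenever (i) holds one may take $\theta=\mathrm{id}_B$.
   Context: A quasivariety is a class of similar algebras closed under isomorphic copies, subalgebras, direct products and ultraproducts. A quasivariety $\mathsf{K}$ has the weak ES property if every $\mathsf{K}$-epimorphism (right-cancellable homomorphism with respect to homomorphisms into members of $\mathsf{K}$) between finitely generated members of $\mathsf{K}$ is surjective. For $\mathbf{A}\in\mathsf{K}$, a congruence $\theta$ of $\mathbf{A}$ is a $\mathsf{K}$-congruence if $\mathbf{A}/\theta\in\mathsf{K}$; $\mathrm{Con}_{\mathsf{K}}(\mathbf{A})$ is the set of these. For $\mathbf{A}\leq\mathbf{B}$ and a congruence $\theta$ of $\mathbf{B}$, $\theta{\upharpoonright}_A=\theta\cap(A\times A)$. $\mathbf{A}\leq\mathbf{B}$ is almost total if $B=\mathrm{Sg}^{\mathbf{B}}(A\cup\{b\})$ for some $b\in B$. $\mathbf{A}\leq\mathbf{B}$ (with $\mathbf{B}\in\mathsf{K}$)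 is full in $\mathsf{K}$ if it is proper, almost total, and for every $\theta\in\mathrm{Con}_{\mathsf{K}}(\mathbf{B})$ with $\theta\neq\mathrm{id}_B$ and every $b\in B$ there is $a\in A$ with $\langle a,b\rangle\in\theta$. An algebra $\mathbf{A}\in\mathsf{K}$ is subdirectly irreducible relative to $\mathsf{K}$ (RSI) if for every subdirect embedding $f\colon\mathbf{A}\to\prod_{i\in I}\mathbf{B}_i$ with all $\mathbf{B}_i\in\mathsf{K}$ some $p_i\circ f$ is an isomorphism (trivial algebras are not RSI); $\mathsf{K}_{\mathrm{RSI}}$ denotes the class of RSI members. *)

(* Defs.v *)
From mathcomp Require Import all_boot.
From Stdlib Require Import List.

Set Implicit Arguments.
Unset Strict Implicit.
Unset Printing Implicit Defensive.

Record signature := Signature { symb : Type; ar : symb -> nat }.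

Section UA.
Variable sg : signature.

Definition Ops (X : Type) := forall f : symb sg, ('I_(ar f) -> X) -> X.

Record algebra := Algebra {
  carrier :> Type;
  ops : Ops carrier;
  nonempty : inhabited carrier }.
Arguments ops : clear implicits.

Definition is_hom_ops (X Y : Type) (oX : Ops X) (oY : Ops Y) (h : X -> Y) :=
  forall f (x : 'I_(ar f) -> X), h (oX f x) = oY f (fun k => h (x k)).

Definition is_hom (A B : algebra) (h : A -> B) := is_hom_ops (ops A) (ops B) h.

Definition injective' (X Y : Type) (h : X -> Y) := forall x y, h x = h y -> x = y.
Definition surjective (X Y : Type) (h : X -> Y) := forall y, exists x, h x = y.

Definition is_embedding (A B : algebra) (h : A -> B) := is_hom h /\ injective' h.
Definition is_iso (A B : algebra) (h : A -> B) :=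
  is_hom h /\ injective' h /\ surjective h.

Definition prod_ops (I : Type) (A : I -> algebra) : Ops (forall i, A i) :=
  fun f x i => ops (A i) f (fun k => x k i).
Arguments prod_ops : clear implicits.

Definition ultrafilter (I : Type) (U : (I -> Prop) -> Prop) :=
  [/\ U (fun _ => True),
      ~ U (fun _ => False),
      (forall X Y : I -> Prop, U X -> (forall i, X i -> Y i) -> U Y),
      (forall X Y : I -> Prop, U X -> U Y -> U (fun i => X i /\ Y i)) &
      (forall X : I -> Prop, U X \/ U (fun i => ~ X i))].

(* Products and ultraproducts are taken
   "up to isomorphism": B is (isomorphic to) the product of the A_i when
   there is a bijective homomorphism from the product onto B; B is (isomorphic
   to) the ultraproduct of the A_i over U when there is a surjective
   homomorphism from the product onto B whose kernel is the U-equivalence. *)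
Definition quasivariety (K : algebra -> Prop) :=
  [/\ (forall (A B : algebra) (h : A -> B), is_iso h -> K A -> K B),
      (forall (A B : algebra) (h : A -> B), is_embedding h -> K B -> K A),
      (forall (I : Type) (A : I -> algebra) (B : algebra)
              (h : (forall i, A i) -> B),
         (forall i, K (A i)) -> is_hom_ops (prod_ops I A) (ops B) h ->
         injective' h -> surjective h -> K B) &
      (forall (I : Type) (A : I -> algebra) (U : (I -> Prop) -> Prop)
              (B : algebra) (h : (forall i, A i) -> B),
         (forall i, K (A i)) -> ultrafilter U ->
         is_hom_ops (prod_ops I A) (ops B) h -> surjective h ->
         (forall x y, h x = h y <-> U (fun i => x i = y i)) -> K B)].

Inductive Sg (A : algebra) (X : A -> Prop) : A -> Prop :=
| Sg_base x : X x -> Sg X x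
| Sg_op f (x : 'I_(ar f) -> A) : (forall k, Sg X (x k)) -> Sg X (ops A f x).

Definition fin_generated (A : algebra) :=
  exists l : list A, forall x, Sg (fun y => In y l) x.

Definition subuniverse (B : algebra) (S : B -> Prop) :=
  (exists a, S a) /\ forall f (x : 'I_(ar f) -> B), (forall k, S (x k)) -> S (ops B f x).

Definition K_epi (K : algebra -> Prop) (A B : algebra) (h : A -> B) :=
  is_hom h /\
  forall C : algebra, K C -> forall g1 g2 : B -> C, is_hom g1 -> is_hom g2 ->
    (forall a, g1 (h a) = g2 (h a)) -> forall b, g1 b = g2 b.

Definition weak_ES (K : algebra -> Prop) :=
  forall A B : algebra, K A -> K B -> fin_generated A -> fin_generated B ->
    forall h : A -> B, K_epi K h -> surjective h.

Definition is_congruence (B : algebra) (th : B -> B -> Prop) :=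
  [/\ (forall x, th x x), (forall x y, th x y -> th y x),
      (forall x y z, th x y -> th y z -> th x z) &
      (forall f (x y : 'I_(ar f) -> B), (forall k, th (x k) (y k)) ->
         th (ops B f x) (ops B f y))].

(* K-congruence: B/th is in K, i.e. th is the kernel of a surjective
   homomorphism onto a member of K (B/th up to isomorphism). *)
Definition K_congruence (K : algebra -> Prop) (B : algebra) (th : B -> B -> Prop) :=
  is_congruence th /\
  exists (C : algebra) (h : B -> C), K C /\ is_hom h /\ surjective h /\
    forall x y, th x y <-> h x = h y.

Definition rel_eq (X : Type) (r s : X -> X -> Prop) := forall x y, r x y <-> s x y.

Definition id_rel (X : Type) : X -> X -> Prop := fun x y => x = y.

Definition restr_eq (B : algebra) (S : B -> Prop) (r s : B -> B -> Prop) :=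
  forall a a', S a -> S a' -> (r a a' <-> s a a').

Definition full (K : algebra -> Prop) (B : algebra) (S : B -> Prop) :=
  [/\ K B, subuniverse S,
      (exists b, ~ S b),
      (exists b, forall x, Sg (fun y => S y \/ y = b) x) &
      (forall th, K_congruence K th -> ~ rel_eq th (@id_rel B) ->
         forall b, exists a, S a /\ th a b)].

Definition RSI (K : algebra -> Prop) (A : algebra) :=
  K A /\
  forall (I : Type) (B : I -> algebra) (f : A -> forall i, B i),
    (forall i, K (B i)) -> is_hom_ops (ops A) (prod_ops I B) f -> injective' f ->
    (forall i, surjective (fun a => f a i)) ->
    exists i, is_iso (fun a => f a i : B i).

End UA.

(* Main.v *)
Require Import Defs.
From mathcomp Require Import all_boot.
From mathcomp Require classical_sets filter.
From Stdlib Require Import Classical ClassicalEpsilon ProofIrrelevance FunctionalExtensionality PropExtensionality.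
From Stdlib Require List.
Set Implicit Arguments. Unset Strict Implicit. Unset Printing Implicit Defensive.
Notation opsA B f := (@ops _ B f).

Lemma fchoice (A B : Type) (P : A -> B -> Prop) :
  (forall a, exists b, P a b) -> exists f : A -> B, forall a, P a (f a).
Proof.
move=> H; exists (fun a => proj1_sig (constructive_indefinite_description _ (H a))).
by move=> a; case: (constructive_indefinite_description _ (H a)).
Qed.

Lemma sig_eq (T : Type) (P : T -> Prop) (a b : {x | P x}) :
  proj1_sig a = proj1_sig b -> a = b.
Proof.
case: a b => x px [y py] /= exy; subst y; f_equal; exact: proof_irrelevance.
Qed.

Definition closed_ops (sg : signature) (B : algebra sg) (S : B -> Prop) :=
  forall f (x : 'I_(ar f) -> B), (forall k, S (x k)) -> S (opsA B f x).

Definition sub_ops (sg : signature) (B : algebra sg) (S : B -> Prop)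
  (HS : closed_ops S) : Ops sg {x | S x} :=
  fun f x => exist S (opsA B f (fun k => proj1_sig (x k)))
                   (HS f _ (fun k => proj2_sig (x k))).

Definition sub_inh (T : Type) (S : T -> Prop) (ne : exists a, S a) : inhabited {x | S x} :=
  match ne with ex_intro a Ha => inhabits (exist S a Ha) end.

Definition SubAlg (sg : signature) (B : algebra sg) (S : B -> Prop)
  (HS : closed_ops S) (ne : exists a, S a) : algebra sg :=
  @Algebra sg {x | S x} (sub_ops HS) (sub_inh ne).

Lemma sub_val_emb (sg : signature) (B : algebra sg) (S : B -> Prop)
  (HS : closed_ops S) (ne : exists a, S a) :
  is_embedding (fun x : SubAlg HS ne => proj1_sig x).
Proof. split; first by []. move=> x y; exact: sig_eq. Qed.

Lemma sub_K (sg : signature) (K : algebra sg -> Prop) (B : algebra sg) (S : B -> Prop)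
  (HS : closed_ops S) (ne : exists a, S a) :
  quasivariety K -> K B -> K (SubAlg HS ne).
Proof. case=> _ Hs _ _ KB; exact: Hs (sub_val_emb HS ne) KB. Qed.

Lemma ker_Kcong (sg : signature) (K : algebra sg -> Prop) (B P : algebra sg) (g : B -> P) :
  quasivariety K -> K P -> is_hom g -> K_congruence K (fun x y => g x = g y).
Proof.
move=> QK KP hg.
have HS : closed_ops (fun p : P => exists x, g x = p).
  move=> f x Hx; have [t Ht] := fchoice Hx.
  exists (opsA B f t); rewrite hg; f_equal; apply: functional_extensionality => k; exact: Ht.
have ne : exists p : P, exists x, g x = p.
  case: (nonempty B) => b; by exists (g b), b.
split.
  split=> //.
  - by move=> x y z -> ->.
  - by move=> f x y Hxy; rewrite !hg; f_equal; apply: functional_extensionality.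
exists (SubAlg HS ne), (fun x => exist _ (g x) (ex_intro _ x erefl)).
split; first exact: sub_K.
split.
  by move=> f x; apply: sig_eq => /=; rewrite hg.
split.
  by case=> p [x Hx]; exists x; apply: sig_eq => /=.
move=> x y; split; first by move=> e; apply: sig_eq.
by move=> e; have := f_equal (@proj1_sig _ _) e.
Qed.

Lemma Kcong_ext (sg : signature) (K : algebra sg -> Prop) (B : algebra sg) (th ph : B -> B -> Prop) :
  K_congruence K th -> rel_eq th ph -> K_congruence K ph.
Proof.
move=> [[r s t c] [C [h [KC [hh [sh ker]]]]]] e.
split.
  split.
  - by move=> x; apply/e.
  - by move=> x y /e /s /e.
  - by move=> x y z /e H1 /e H2; apply/e; apply: t H1 H2.
  - by move=> f x y H; apply/e; apply: c => k; apply/e.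
exists C, h; do 3 (split => //).
by move=> x y; rewrite -e.
Qed.

Lemma Kcong_ker (sg : signature) (K : algebra sg -> Prop) (B : algebra sg) (th : B -> B -> Prop) :
  K_congruence K th -> exists (C : algebra sg) (h : B -> C),
    [/\ K C, is_hom h, surjective h & forall x y, th x y <-> h x = h y].
Proof. by move=> [_ [C [h [? [? [? ?]]]]]]; exists C, h. Qed.

Lemma id_Kcong (sg : signature) (K : algebra sg -> Prop) (B : algebra sg) :
  quasivariety K -> K B -> K_congruence K (@id_rel B).
Proof.
move=> QK KB; apply: (@ker_Kcong _ K B B id QK KB) => //.
Qed.

Lemma prod_inh (I : Type) (T : I -> Type) : (forall i, inhabited (T i)) -> inhabited (forall i, T i).
Proof.
move=> H.
exact: inhabits (fun i => epsilon (H i) (fun _ => True)).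
Qed.

Definition ProdAlg (sg : signature) (I : Type) (A : I -> algebra sg) : algebra sg :=
  @Algebra sg (forall i, A i) (@prod_ops sg I A) (prod_inh (fun i => nonempty (A i))).

Lemma prod_K (sg : signature) (K : algebra sg -> Prop) (I : Type) (A : I -> algebra sg) :
  quasivariety K -> (forall i, K (A i)) -> K (ProdAlg A).
Proof.
case=> _ _ Hp _ KA; apply: (Hp I A (ProdAlg A) id KA) => //.
by move=> y; exists y.
Qed.


Lemma In_of_mem (T : eqType) (x : T) (s : seq T) : x \in s -> List.In x s.
Proof.
elim: s => //= y s IH; rewrite inE => /orP [/eqP ->|/IH]; auto.
Qed.

Lemma U_up (I : Type) (U : (I -> Prop) -> Prop) (X Y : I -> Prop) :
  ultrafilter U -> U X -> (forall i, X i -> Y i) -> U Y.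
Proof. by case=> _ _ H _ _; apply: H. Qed.

Lemma U_T (I : Type) (U : (I -> Prop) -> Prop) (Y : I -> Prop) :
  ultrafilter U -> (forall i, Y i) -> U Y.
Proof. move=> uU H; case: (uU) => HT _ _ _ _; apply: U_up uU HT _ => i _; exact: H. Qed.

Lemma U_list (I T : Type) (U : (I -> Prop) -> Prop) (P : T -> I -> Prop) (l : list T) :
  ultrafilter U -> (forall k, U (P k)) -> U (fun i => forall k, List.In k l -> P k i).
Proof.
move=> uU HP; elim: l => [|a l IH]; first by apply: U_T => // i k [].
case: (uU) => _ _ _ HI _.
apply: U_up uU (HI _ _ (HP a) IH) _ => i [Ha Hl] k /= [<-|]; auto.
Qed.

Lemma U_fin (I : Type) (U : (I -> Prop) -> Prop) (n : nat) (P : 'I_n -> I -> Prop) :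
  ultrafilter U -> (forall k, U (P k)) -> U (fun i => forall k, P k i).
Proof.
move=> uU HP; apply: U_up uU (U_list (enum 'I_n) uU HP) _ => i H k.
apply: H; apply: In_of_mem; exact: mem_enum.
Qed.

Lemma U_exlist (I T : Type) (U : (I -> Prop) -> Prop) (P : T -> I -> Prop) (l : list T) :
  ultrafilter U -> U (fun i => exists k, List.In k l /\ P k i) -> exists k, List.In k l /\ U (P k).
Proof.
move=> uU; elim: l => [|a l IH] /=.
  move=> H; case: (uU) => _ HF _ _ _; exfalso; apply: HF.
  by apply: U_up uU H _ => i [k [[] _]].
move=> H; case: (uU) => _ HF _ HI HC.
case: (HC (P a)) => Ha; first by exists a; auto.
have [k [Hk Uk]] : exists k, List.In k l /\ U (P k).
  apply: IH; apply: U_up uU (HI _ _ H Ha) _ => i [[k [[<-|Hk] Pk]] Hn] //.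
  by exists k.
by exists k; auto.
Qed.

Lemma ultra_K (sg : signature) (K : algebra sg -> Prop) (I : Type) (A : I -> algebra sg)
  (U : (I -> Prop) -> Prop) :
  quasivariety K -> (forall i, K (A i)) -> ultrafilter U ->
  exists (D : algebra sg) (pi : (forall i, A i) -> D),
    [/\ K D, is_hom (A:=ProdAlg A) (B:=D) pi, surjective pi &
        forall x y, pi x = pi y <-> U (fun i => x i = y i)].
Proof.
move=> QK KA uU.
pose cls (x : forall i, A i) := fun y : forall i, A i => U (fun i => x i = y i).
have cls_eq x y : U (fun i => x i = y i) -> cls x = cls y.
  move=> Hxy; apply: functional_extensionality => z; apply: propositional_extensionality.
  case: (uU) => _ _ _ HI _; split => H.
    apply: U_up uU (HI _ _ Hxy H) _ => i [-> ->] //.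
  apply: U_up uU (HI _ _ Hxy H) _ => i [-> ->] //.
have eq_cls x y : cls x = cls y -> U (fun i => x i = y i).
  move=> e; have : cls y y by apply: U_T.
  by rewrite -e.
pose Q := {P : (forall i, A i) -> Prop | exists x, P = cls x}.
pose rep (q : Q) : forall i, A i :=
  proj1_sig (constructive_indefinite_description _ (proj2_sig q)).
have rep_spec (q : Q) : proj1_sig q = cls (rep q).
  by rewrite /rep; case: (constructive_indefinite_description _ _).
pose qops : Ops sg Q := fun f xs =>
  exist _ (cls (@prod_ops sg I A f (fun k => rep (xs k)))) (ex_intro _ _ erefl).
pose pi (x : forall i, A i) : Q := exist _ (cls x) (ex_intro _ x erefl).
have inhQ : inhabited Q.
  by case: (nonempty (ProdAlg A)) => x; constructor; exact: pi x.
pose D := @Algebra sg Q qops inhQ.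
have hpi : is_hom (A:=ProdAlg A) (B:=D) pi.
  move=> f x; apply: sig_eq => /=; apply: cls_eq.
  have H k : U (fun i => x k i = rep (pi (x k)) i).
    apply: eq_cls; rewrite -rep_spec //.
  apply: U_up uU (U_fin uU H) _ => i Hi.
  rewrite /prod_ops; f_equal; apply: functional_extensionality => k; exact: Hi.
have spi : surjective pi.
  by case=> P [x Hx]; exists x; apply: sig_eq => /=; rewrite Hx.
exists D, pi; split => //.
  case: QK => _ _ _ Hu; apply: (Hu I A U D pi KA uU hpi spi).
  move=> x y; split.
    by move=> e; apply: eq_cls; have := f_equal (@proj1_sig _ _) e.
  by move=> H; apply: sig_eq => /=; apply: cls_eq.
move=> x y; split.
  by move=> e; apply: eq_cls; have := f_equal (@proj1_sig _ _) e.
by move=> H; apply: sig_eq => /=; apply: cls_eq.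
Qed.


Lemma ultra_directed (I : Type) (le : I -> I -> Prop) (i0 : I) :
  (forall i, le i i) -> (forall i j k, le i j -> le j k -> le i k) ->
  (forall i j, exists k, le i k /\ le j k) ->
  exists U, ultrafilter U /\ forall i, U (fun j => le i j).
Proof.
move=> lerefl letr ledir.
pose F := fun X : I -> Prop => exists i, forall j, le i j -> X j.
have FF : filter.ProperFilter F.
  constructor.
  - by case=> i /(_ i (lerefl i)).
  - constructor.
    + by exists i0.
    + move=> X Y [i Hi] [j Hj]; have [k [ik jk]] := ledir i j.
      by exists k => l kl; split; [apply: Hi; apply: letr ik kl|apply: Hj; apply: letr jk kl].
    + move=> X Y XY [i Hi]; exists i => j ij; exact: XY (Hi j ij).
have [G [UG FG]] := filter.ultraFilterLemma FF.
exists G; split; last by move=> i; apply: FG; exists i.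
have GP : filter.ProperFilter G := @filter.ultra_proper _ _ UG.
split.
- exact (@filter.filterT _ _ (@filter.filter_filter _ _ GP)).
- move=> H; apply: (@filter.filter_not_empty _ G GP).
  by have -> : (classical_sets.set0 : I -> Prop) = (fun _ => False).
- move=> X Y GX XY; exact: (@filter.filterS _ _ (@filter.filter_filter _ _ GP) X Y XY GX).
- move=> X Y GX GY; exact: (@filter.filterI _ _ (@filter.filter_filter _ _ GP) X Y GX GY).
- move=> X; exact: (filter.in_ultra_setVsetC X UG).
Qed.


Lemma dir_list (J T : Type) (le : J -> J -> Prop) (j0 : J) (jj : T -> J) (l : list T) :
  (forall i j k, le i j -> le j k -> le i k) ->
  (forall i j, exists k, le i k /\ le j k) ->
  exists j, forall k, List.In k l -> le (jj k) j.
Proof.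
move=> tr dir; elim: l => [|a l [j Hj]]; first by exists j0.
have [k [ak jk]] := dir (jj a) j.
by exists k => t /= [<-|Ht] //; apply: tr (Hj t Ht) jk.
Qed.

Lemma chain_Kcong (sg : signature) (K : algebra sg -> Prop) (D : algebra sg)
  (J : Type) (Th : J -> D -> D -> Prop) (j0 : J) :
  quasivariety K -> (forall j, K_congruence K (Th j)) ->
  (forall j j', exists k, (forall x y, Th j x y -> Th k x y) /\ (forall x y, Th j' x y -> Th k x y)) ->
  K_congruence K (fun x y => exists j, Th j x y).
Proof.
move=> QK KTh dir.
pose le j k := forall x y, Th j x y -> Th k x y.
have tr : forall i j k, le i j -> le j k -> le i k by move=> i j k H1 H2 x y /H1 /H2.
have rf : forall i, le i i by move=> i x y.
have [U [uU Ule]] := ultra_directed j0 rf tr dir.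
have : forall j, exists Ch : {C : algebra sg & D -> C},
    [/\ K (projT1 Ch), is_hom (projT2 Ch) & forall x y, Th j x y <-> projT2 Ch x = projT2 Ch y].
  move=> j; have [C [h [KC hh sh kh]]] := Kcong_ker (KTh j).
  by exists (existT _ C h).
move=> /fchoice [Ch HCh].
pose A j := projT1 (Ch j).
have KA : forall j, K (A j) by move=> j; case: (HCh j).
have [D' [pi [KD' hpi spi kpi]]] := ultra_K QK KA uU.
pose g (x : D) : D' := pi (fun j => projT2 (Ch j) x).
have hg : is_hom g.
  move=> f x; rewrite /g -hpi; f_equal; apply: functional_extensionality_dep => j.
  by case: (HCh j) => _ hh _; rewrite hh.
apply: Kcong_ext (ker_Kcong QK KD' hg) _.
move=> x y; rewrite /g kpi; split.
  move=> Hu; apply: NNPP => Hn; case: (uU) => _ HF _ _ _; apply: HF.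
  apply: U_up uU Hu _ => j e; apply: Hn; exists j.
  by case: (HCh j) => _ _ ->.
case=> j Hj; apply: U_up uU (Ule j) _ => k jk.
by case: (HCh k) => _ _ <-; apply: jk.
Qed.

Definition good (sg : signature) (D : algebra sg) (S : D -> Prop) (b : D) (th : D -> D -> Prop) :=
  ~ (exists a, S a /\ th b a).

Lemma max_cong (sg : signature) (K : algebra sg -> Prop) (D : algebra sg) (S : D -> Prop) (b : D) :
  quasivariety K -> K D -> ~ S b ->
  exists th, [/\ K_congruence K th, good S b th &
    forall ps, K_congruence K ps -> (forall x y, th x y -> ps x y) -> good S b ps -> rel_eq ps th].
Proof.
move=> QK KD nSb.
pose ro (X : D * D -> Prop) := fun x y => X (x, y).
pose P := fun X : D * D -> Prop => (forall p, ~ X p) \/ (K_congruence K (ro X) /\ good S b (ro X)).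
have [A [PA Amax]] : exists A, P A /\ forall B, classical_sets.proper A B -> ~ P B.
  apply: classical_sets.Zorn_bigcup => F FP Ftot.
  case: (classic (exists X, F X /\ exists p, X p)); last first.
    move=> Hn; left => p [X FX Xp]; apply: Hn; exists X; split => //; by exists p.
  case=> X0 [FX0 [p0 Xp0]]; right.
  pose J := {X | F X /\ exists p, X p}.
  pose Th (j : J) := ro (proj1_sig j).
  have KTh : forall j, K_congruence K (Th j) /\ good S b (Th j).
    case=> X [FX [p Xp]]; rewrite /Th /=; case: (FP X FX) => //.
    by move=> H; exfalso; apply: (H p).
  have dir : forall j j', exists k, (forall x y, Th j x y -> Th k x y) /\ (forall x y, Th j' x y -> Th k x y).
    move=> j j'; case: (Ftot _ _ (proj1 (proj2_sig j)) (proj1 (proj2_sig j'))) => sub.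
      by exists j'; split => // x y; apply: sub.
    by exists j; split => // x y; apply: sub.
  have eqU : rel_eq (fun x y => exists j, Th j x y) (ro (classical_sets.bigcup F (fun X => X))).
    move=> x y; split.
      by case=> j H; exists (proj1_sig j) => //; case: (proj2_sig j).
    case=> X FX HX; by exists (exist _ X (conj FX (ex_intro _ _ HX))).
  split.
    apply: Kcong_ext eqU.
    apply: (chain_Kcong (exist _ X0 (conj FX0 (ex_intro _ _ Xp0)))) QK (fun j => proj1 (KTh j)) dir.
  move=> [a [Sa H]]; have /eqU [j Hj] := H.
  by case: (KTh j) => _ Hg; apply: Hg; exists a.
have Aid : forall x, A (x, x).
  move=> x; apply: NNPP => nA.
  have Pid : P (fun p => p.1 = p.2).
    right; split.
      apply: Kcong_ext (id_Kcong QK KD) _; by move=> u v.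
    by move=> [a [Sa /= e]]; apply: nSb; rewrite e.
  case: PA => [HA|[[[r _ _ _] _] _]]; last by apply: nA; apply: r.
  apply: (Amax _ _ Pid); split; first by move=> p /HA.
  by move=> H; apply: (HA (x, x)); apply: H.
case: PA => [HA|[KA gA]]; first by case: (nonempty D) => d; exfalso; apply: (HA (d, d) (Aid d)).
exists (ro A); split => // ps Kps sub gps.
apply: NNPP => Hne.
apply: (Amax (fun p => ps p.1 p.2)).
  split; first by case=> x y /sub.
  move=> H; apply: Hne => x y; split; last by apply: sub.
  by move=> Hp; apply: (H (x, y)).
by right.
Qed.


Lemma Sg_mono (sg : signature) (B : algebra sg) (X Y : B -> Prop) :
  (forall y, X y -> Y y) -> forall x, Sg X x -> Sg Y x.
Proof.
move=> XY x; elim=> [y /XY|f z _ IH]; first exact: Sg_base.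
exact: Sg_op.
Qed.

Lemma Sg_closed_sub (sg : signature) (B : algebra sg) (X T : B -> Prop) :
  closed_ops T -> (forall y, X y -> T y) -> forall x, Sg X x -> T x.
Proof.
move=> cT XT x; elim=> [y /XT //|f z _ IH]; exact: cT.
Qed.

Lemma Sg_closed (sg : signature) (B : algebra sg) (X : B -> Prop) : closed_ops (Sg X).
Proof. move=> f x H; exact: Sg_op. Qed.

Lemma hom_Sg (sg : signature) (B C : algebra sg) (q : B -> C) (X : B -> Prop) :
  is_hom q -> forall x, Sg X x -> Sg (fun c => exists y, X y /\ q y = c) (q x).
Proof.
move=> hq x; elim=> [y Xy|f z _ IH]; first by apply: Sg_base; exists y.
rewrite hq; exact: Sg_op.
Qed.

Lemma homs_agree_Sg (sg : signature) (B C : algebra sg) (g h : B -> C) (X : B -> Prop) :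
  is_hom g -> is_hom h -> (forall y, X y -> g y = h y) -> forall x, Sg X x -> g x = h x.
Proof.
move=> hg hh E x; elim=> [y /E //|f z _ IH].
rewrite hg hh; f_equal; exact: functional_extensionality.
Qed.

Lemma hom_comp (sg : signature) (A B C : algebra sg) (g : A -> B) (h : B -> C) :
  is_hom g -> is_hom h -> is_hom (fun x => h (g x)).
Proof. by move=> hg hh f x; rewrite hg hh. Qed.

Lemma Kcong_cong (sg : signature) (K : algebra sg -> Prop) (B : algebra sg) (th : B -> B -> Prop) :
  K_congruence K th -> is_congruence th.
Proof. by case. Qed.

Lemma meet_Kcong (sg : signature) (K : algebra sg -> Prop) (B : algebra sg) (th ph : B -> B -> Prop) :
  quasivariety K -> K_congruence K th -> K_congruence K ph ->
  K_congruence K (fun x y => th x y /\ ph x y).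
Proof.
move=> QK /Kcong_ker [C1 [h1 [K1 hh1 _ k1]]] /Kcong_ker [C2 [h2 [K2 hh2 _ k2]]].
pose A := fun b : bool => if b then C1 else C2.
have KA : forall b, K (A b) by case.
pose g (x : B) : ProdAlg A := fun b => match b as b return A b with true => h1 x | false => h2 x end.
have hg : is_hom g.
  move=> f x; apply: functional_extensionality_dep; case => /=.
    by rewrite hh1.
  by rewrite hh2.
apply: Kcong_ext (ker_Kcong QK (prod_K QK KA) hg) _.
move=> x y; split.
  move=> e; split.
    by apply/k1; have := f_equal (fun F => F true) e.
  by apply/k2; have := f_equal (fun F => F false) e.
case=> /k1 e1 /k2 e2; apply: functional_extensionality_dep; case => /=; done.
Qed.

Lemma moreover (sg : signature) (K : algebra sg -> Prop) (B : algebra sg) (S : B -> Prop) :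
  quasivariety K -> full K S ->
  (exists th ph : B -> B -> Prop,
        [/\ K_congruence K th, K_congruence K ph, ~ rel_eq th ph & restr_eq S th ph]) ->
  exists ph : B -> B -> Prop,
       [/\ K_congruence K ph, ~ rel_eq (@id_rel B) ph & restr_eq S (@id_rel B) ph].
Proof.
move=> QK [KB subS _ _ fullS] [th [ph [Kth Kph ne rs]]].
case: (classic (rel_eq th (@id_rel B))) => [eth|nth].
  exists ph; split => //.
    move=> e; apply: ne => x y; rewrite eth; exact: e.
  move=> a a' Sa Sa'; rewrite -eth; exact: rs.
case: (classic (rel_eq ph (@id_rel B))) => [eph|nph].
  exists th; split => //.
    move=> e; apply: ne => x y; rewrite eph -e //.
  move=> a a' Sa Sa'; rewrite -eph; split => H; apply/rs => //.
exists th; split => //.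
  by move=> e; apply: nth => x y; rewrite e.
have Kps := meet_Kcong QK Kth Kph.
have [rt st tt ct] := Kcong_cong Kth.
have [rp sp tp cp] := Kcong_cong Kph.
case: (classic (rel_eq (fun x y => th x y /\ ph x y) (@id_rel B))) => [eps|nps].
  move=> a a' Sa Sa'; split => [e|H].
    by rewrite /id_rel in e; subst a'.
  apply/eps; split => //; exact/rs.
exfalso; apply: ne => x y.
have Hn : ~ rel_eq (fun x y => th x y /\ ph x y) (@id_rel B).
  by move=> e; apply: nps.
have [ax [Sax [tx px]]] := fullS _ Kps Hn x.
have [ay [Say [ty py]]] := fullS _ Kps Hn y.
split => H.
  have : th ax ay by apply: tt (tt _ _ _ tx H) (st _ _ ty).
  move/(rs _ _ Sax Say) => Hp.
  exact: tp (tp _ _ _ (sp _ _ px) Hp) py.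
have : ph ax ay by apply: tp (tp _ _ _ px H) (sp _ _ py).
move/(rs _ _ Sax Say) => Ht.
exact: tt (tt _ _ _ (st _ _ tx) Ht) ty.
Qed.


Lemma RSI_sep (sg : signature) (K : algebra sg -> Prop) (D : algebra sg) (x0 y0 : D) :
  quasivariety K -> K D -> x0 <> y0 ->
  exists (C : algebra sg) (q : D -> C), [/\ RSI K C, is_hom q & q x0 <> q y0].
Proof.
move=> QK KD nxy.
have [th [Kth gth mth]] := @max_cong sg K D (fun a => a = y0) x0 QK KD nxy.
have [C [q [KC hq sq kq]]] := Kcong_ker Kth.
have nq : q x0 <> q y0 by move=> /kq H; apply: gth; exists y0.
exists C, q; split => //.
split => // I Bs f KBs hf injf sf.
have : f (q x0) <> f (q y0) by move=> /injf.
move=> nf; have [i Hi] : exists i, f (q x0) i <> f (q y0) i.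
  apply: NNPP => Hn; apply: nf; apply: functional_extensionality_dep => i.
  by apply: NNPP => H; apply: Hn; exists i.
exists i.
have hfi : is_hom (A:=C) (B:=Bs i) (fun c => f c i).
  by move=> g x; rewrite hf.
have hps : is_hom (fun x => f (q x) i) := hom_comp hq hfi.
have Kps := ker_Kcong QK (KBs i) hps.
have eq := mth _ Kps (fun x y H => f_equal (fun c => f c i) (proj1 (kq x y) H)).
have {}eq : rel_eq (fun x y => f (q x) i = f (q y) i) th.
  by apply: eq => [[a [-> e]]]; apply: Hi.
split => //; split; last exact: sf.
move=> c c' e; have [x ex] := sq c; have [y ey] := sq c'; subst c c'.
apply/kq; apply/eq; exact: e.
Qed.


Lemma lift_list (T : Type) (P : T -> Prop) (l : list T) :
  (forall y, List.In y l -> P y) -> exists l' : list {x | P x}, List.map (@proj1_sig _ _) l' = l.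
Proof.
elim: l => [|a l IH] H; first by exists nil.
have [l' e] : exists l' : list {x | P x}, List.map (@proj1_sig _ _) l' = l.
  by apply: IH => y Hy; apply: H; right.
by exists (exist _ a (H a (or_introl erefl)) :: l') => /=; rewrite e.
Qed.

Lemma sub_fg (sg : signature) (B : algebra sg) (l0 : list B) ne :
  fin_generated (SubAlg (@Sg_closed sg B (fun y => List.In y l0)) ne).
Proof.
have [l' e] := @lift_list _ (Sg (fun y => List.In y l0)) l0 (fun y H => Sg_base H).
exists l'.
suff H : forall z, Sg (fun y => List.In y l0) z -> forall pz,
    Sg (A := SubAlg (@Sg_closed sg B (fun y => List.In y l0)) ne) (fun y => List.In y l') (exist _ z pz).
  by case=> z pz; apply: H.
move=> z; elim=> [y Hy|f x Hx IH] pz.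
  rewrite -e in Hy; have [y' [ey' iy']] := proj1 (List.in_map_iff _ _ _) Hy.
  have -> : exist _ y pz = y' by apply: sig_eq.
  exact: Sg_base.
have -> : exist _ (opsA B f x) pz =
  opsA (SubAlg (@Sg_closed sg B (fun y => List.In y l0)) ne) f (fun k => exist _ (x k) (Hx k)).
  by apply: sig_eq.
apply: Sg_op => k; exact: IH.
Qed.

Lemma dominion (sg : signature) (K : algebra sg -> Prop) (B : algebra sg) (S : B -> Prop) :
  quasivariety K -> weak_ES K -> fin_generated B -> full K S ->
  exists (C : algebra sg) (g h : B -> C),
    [/\ K C, is_hom g, is_hom h, (forall a, S a -> g a = h a) & exists x, g x <> h x].
Proof.
move=> QK wES fgB [KB [[a0 Sa0] cS] [b0 nSb0] _ _].
pose I := {l : list B | forall y, List.In y l -> S y}.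
pose G (l : I) := fun y => List.In y (a0 :: proj1_sig l).
have GS : forall l y, G l y -> S y.
  by move=> [l Hl] y [<-|Hy] //; apply: (Hl y Hy).
have neG : forall l : I, exists a, Sg (G l) a by move=> l; exists a0; apply: Sg_base; left.
have : forall l : I, exists Ch : {C : algebra sg & ((B -> C) * (B -> C))%type},
    [/\ K (projT1 Ch), is_hom (projT2 Ch).1, is_hom (projT2 Ch).2,
        (forall y, G l y -> (projT2 Ch).1 y = (projT2 Ch).2 y) &
        exists b, (projT2 Ch).1 b <> (projT2 Ch).2 b].
  move=> l.
  pose Al := SubAlg (@Sg_closed sg B (G l)) (neG l).
  have KAl : K Al := sub_K _ _ QK KB.
  have fgAl : fin_generated Al := sub_fg _.
  have hv : is_hom (fun x : Al => proj1_sig x) by [].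
  have nepi : ~ K_epi K (fun x : Al => proj1_sig x).
    move=> ep; have [[y py] ey] := wES _ _ KAl KB fgAl fgB _ ep b0.
    apply: nSb0; rewrite -ey /=; exact: Sg_closed_sub cS (GS l) _ py.
  apply: NNPP => Hn; apply: nepi; split => // C KC g1 g2 hg1 hg2 E b.
  apply: NNPP => nb; apply: Hn; exists (existT _ C (g1, g2)); split => //=.
    by move=> y Gy; apply: (E (exist _ y (Sg_base Gy))).
  by exists b.
move=> /fchoice [Ch HCh].
pose le (l l' : I) := forall y, List.In y (proj1_sig l) -> List.In y (proj1_sig l').
have i0 : I by exists nil.
have [U [uU Ule]] : exists U, ultrafilter U /\ forall i, U (fun j => le i j).
  apply: (ultra_directed i0).
  - by move=> i y.
  - by move=> i j k H1 H2 y /H1 /H2.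
  - move=> [l Hl] [l' Hl'].
    have Hll : forall y, List.In y (l ++ l') -> S y.
      by move=> y /List.in_app_iff [/Hl|/Hl'].
    exists (exist _ (l ++ l') Hll); split => y Hy /=; apply/List.in_app_iff; auto.
pose A l := projT1 (Ch l).
have KA : forall l, K (A l) by move=> l; case: (HCh l).
have [D' [pi [KD' hpi spi kpi]]] := ultra_K QK KA uU.
pose g (x : B) : D' := pi (fun l => (projT2 (Ch l)).1 x).
pose h (x : B) : D' := pi (fun l => (projT2 (Ch l)).2 x).
have hg : is_hom g.
  move=> f x; rewrite /g -hpi; f_equal; apply: functional_extensionality_dep => l.
  by case: (HCh l) => _ hh _ _ _; rewrite hh.
have hh : is_hom h.
  move=> f x; rewrite /h -hpi; f_equal; apply: functional_extensionality_dep => l.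
  by case: (HCh l) => _ _ hh _ _; rewrite hh.
exists D', g, h; split => //.
  move=> a Sa; apply/kpi.
  have Hla : forall y, List.In y [:: a] -> S y by move=> y [<-|[]].
  apply: (U_up uU (Ule (exist _ [:: a] Hla))) => l al.
  case: (HCh l) => _ _ _ E _; apply: E; right; apply: al; by left.
have [X HX] := fgB.
have Hall : U (fun l => exists x, List.In x X /\ (projT2 (Ch l)).1 x <> (projT2 (Ch l)).2 x).
  apply: (U_T uU) => l; apply: NNPP => Hn.
  case: (HCh l) => _ h1 h2 _ [b nb]; apply: nb.
  apply: (homs_agree_Sg h1 h2 _ (HX b)) => y Hy.
  by apply: NNPP => ny; apply: Hn; exists y.
have [x [_ Ux]] := U_exlist uU Hall.
exists x => /kpi Ue.
case: (uU) => _ HF _ HI _; apply: HF.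
by apply: U_up uU (HI _ _ Ux Ue) _ => l [].
Qed.


Lemma fwd (sg : signature) (K : algebra sg -> Prop) :
  quasivariety K -> weak_ES K ->
    (forall (B : algebra sg) (S : B -> Prop),
       fin_generated B -> full K S ->
       (exists th ph : B -> B -> Prop,
          [/\ K_congruence K th, K_congruence K ph, ~ rel_eq th ph &
              restr_eq S th ph])
       \/
       (exists (C : algebra sg) (g h : B -> C),
          [/\ RSI K C, is_embedding g, is_embedding h,
              (exists b, g b <> h b) &
              (forall a, S a -> g a = h a)])).
Proof.
move=> QK wES B S fgB fS.
case: (classic (exists th ph : B -> B -> Prop,
          [/\ K_congruence K th, K_congruence K ph, ~ rel_eq th ph &
              restr_eq S th ph])) => [Hi|Hni]; [by left|right].
have [C [g [h [KC hg hh agree [x0 nx0]]]]] := dominion QK wES fgB fS.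
have [C2 [q [RC hq nq]]] := RSI_sep QK KC nx0.
have KC2 : K C2 by case: RC.
have hg' := hom_comp hg hq.
have hh' := hom_comp hh hq.
have Kg := ker_Kcong QK KC2 hg'.
have Kh := ker_Kcong QK KC2 hh'.
have Req : rel_eq (fun x y => q (g x) = q (g y)) (fun x y => q (h x) = q (h y)).
  apply: NNPP => ne; apply: Hni; do 2 eexists; split; [exact: Kg|exact: Kh|exact: ne|].
  by move=> a a' Sa Sa'; rewrite !agree.
have inj : rel_eq (fun x y => q (g x) = q (g y)) (@id_rel B).
  apply: NNPP => ne; case: fS => _ _ _ _ fullS.
  have [a [Sa ea]] := fullS _ Kg ne x0.
  have eb : q (h a) = q (h x0) by apply/Req.
  by apply: nq; rewrite -ea -eb agree.
exists C2, (fun x => q (g x)), (fun x => q (h x)); split => //.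
- by split => // x y /inj.
- by split => // x y /Req /inj.
- by exists x0.
- by move=> a Sa; rewrite agree.
Qed.

Lemma almost_total (sg : signature) (B : algebra sg) (X : list B) :
  forall T : B -> Prop, closed_ops T -> (exists y, ~ T y) ->
  (forall x, Sg (fun y => T y \/ List.In y X) x) ->
  exists (T' : B -> Prop) (b : B), [/\ closed_ops T', (forall y, T y -> T' y), ~ T' b &
     forall x, Sg (fun y => T' y \/ y = b) x].
Proof.
elim: X => [|a l IH] T cT [y0 ny0] gen.
  exfalso; apply: ny0; apply: (Sg_closed_sub cT _ (gen y0)) => y [Ty|[]] //.
pose T1 := Sg (fun y => T y \/ y = a).
case: (classic (exists y, ~ T1 y)) => [ne|nne].
  have gen' : forall x, Sg (fun y => T1 y \/ List.In y l) x.
    move=> x; apply: (Sg_mono _ (gen x)) => y [Ty|[ea|Hl]].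
    - by left; apply: Sg_base; left.
    - by left; apply: Sg_base; right.
    - by right.
  have [T' [b [c1 c2 c3 c4]]] := IH T1 (@Sg_closed _ _ _) ne gen'.
  exists T', b; split => // y Ty; apply: c2; apply: Sg_base; by left.
exists T, a; split => //.
  move=> Ta; apply: ny0; have : T1 y0 by apply: NNPP => H; apply: nne; exists y0.
  rewrite /T1; apply: (Sg_closed_sub cT) => y [|->] //.
move=> x; apply: NNPP => H; apply: nne; by exists x.
Qed.

Lemma img_closed (sg : signature) (A B : algebra sg) (h : A -> B) (T : A -> Prop) :
  is_hom h -> closed_ops T -> closed_ops (fun y => exists x, T x /\ h x = y).
Proof.
move=> hh cT f x Hx; have [t Ht] := fchoice Hx.
exists (opsA A f t); split; first by apply: cT => k; case: (Ht k).
rewrite hh; f_equal; apply: functional_extensionality => k; by case: (Ht k).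
Qed.

Lemma bwd (sg : signature) (K : algebra sg -> Prop) :
  quasivariety K ->
    (forall (B : algebra sg) (S : B -> Prop),
       fin_generated B -> full K S ->
       (exists th ph : B -> B -> Prop,
          [/\ K_congruence K th, K_congruence K ph, ~ rel_eq th ph &
              restr_eq S th ph])
       \/
       (exists (C : algebra sg) (g h : B -> C),
          [/\ RSI K C, is_embedding g, is_embedding h,
              (exists b, g b <> h b) &
              (forall a, S a -> g a = h a)])) ->
  weak_ES K.
Proof.
move=> QK Hc A B KA KB fgA fgB h [hh epi] y0; apply: NNPP => ny0.
pose T0 y := exists x, True /\ h x = y.
have cT0 : closed_ops T0 by apply: img_closed.
have [X HX] := fgB.
have [T' [b [cT' T0T' nTb genb]]] : exists (T' : B -> Prop) (b : B),
   [/\ closed_ops T', (forall y, T0 y -> T' y), ~ T' b &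
     forall x, Sg (fun y => T' y \/ y = b) x].
  apply: (almost_total (X := X) cT0).
    by exists y0 => [[x [_ e]]]; apply: ny0; exists x.
  by move=> x; apply: (Sg_mono _ (HX x)) => y; right.
have [th [Kth gth mth]] := max_cong QK KB nTb.
have [C [q [KC hq sq kq]]] := Kcong_ker Kth.
have [rt st tt ct] := Kcong_cong Kth.
pose S' c := exists t, T' t /\ q t = c.
have cS' : closed_ops S' by apply: img_closed.
have fgC : fin_generated C.
  exists (List.map q X) => c; have [x <-] := sq c.
  apply: (Sg_mono _ (hom_Sg hq (HX x))) => c' [y [Hy <-]].
  exact: List.in_map.
have nS' : ~ S' (q b).
  by move=> [t [Tt /kq e]]; apply: gth; exists t; split => //; apply: st.
have T0S' : forall a, S' (q (h a)).
  by move=> a; exists (h a); split => //; apply: T0T'; exists a.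
have genC : forall c, Sg (fun y => S' y \/ y = q b) c.
  move=> c; have [x <-] := sq c.
  apply: (Sg_mono _ (hom_Sg hq (genb x))) => c' [y [[Ty|->] <-]].
    by left; exists y.
  by right.
have fullS' : full K S'.
  split => //.
  - split => //; case: (nonempty A) => a; exists (q (h a)); exact: T0S'.
  - by exists (q b).
  - by exists (q b).
  move=> ps Kps nps.
  have [C2 [q2 [KC2 hq2 sq2 kq2]]] := Kcong_ker Kps.
  have [rp sp tp cp] := Kcong_cong Kps.
  have hqq := hom_comp hq hq2.
  have Kpb := ker_Kcong QK KC2 hqq.
  have [t [Tt pbt]] : exists t, T' t /\ q2 (q b) = q2 (q t).
    apply: NNPP => ng; apply: nps.
    have e : rel_eq (fun x y => q2 (q x) = q2 (q y)) th.
      apply: (mth _ Kpb) => // x y /kq e; by rewrite e.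
    move=> c c'; have [x ex] := sq c; have [y ey] := sq c'; subst c c'.
    rewrite kq2; split => H.
      by apply/kq; apply/e.
    by rewrite /id_rel in H; rewrite H.
  have pbt' : ps (q t) (q b) by apply/kq2.
  move=> c; elim: (genC c) => [y [Sy|->]|f x _ IH].
  - by exists y; split => //; apply: rp.
  - by exists (q t); split => //; exists t.
  have [a Ha] := fchoice IH.
  exists (opsA C f a); split.
    by apply: cS' => k; case: (Ha k).
  by apply: cp => k; case: (Ha k).
case: (Hc C S' fgC fullS') => [Hi|[C' [g' [h' [RC [hg' _] [hh' _] [c0 nc0] ag]]]]].
  have [ps [Kps nps rps]] := moreover QK fullS' Hi.
  have [rp sp tp cp] := Kcong_cong Kps.
  case: (fullS') => _ _ _ _ fullP.
  have [r Hr] := fchoice (fullP _ Kps (fun e => nps (fun x y => iff_sym (e x y)))).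
  have uniq : forall a a' c, S' a -> S' a' -> ps a c -> ps a' c -> a = a'.
    move=> a a' c Sa Sa' H1 H2; apply/(rps _ _ Sa Sa'); exact: tp H1 (sp _ _ H2).
  have hr : is_hom r.
    move=> f x; apply: (uniq _ _ (opsA C f x)).
    - by case: (Hr (opsA C f x)).
    - by apply: cS' => k; case: (Hr (x k)).
    - by case: (Hr (opsA C f x)).
    - by apply: cp => k; case: (Hr (x k)).
  have E := epi C KC q (fun x => r (q x)) hq (hom_comp hq hr).
  have : q b = r (q b).
    apply: E => a; apply: (uniq _ _ (q (h a))).
    - exact: T0S'.
    - by case: (Hr (q (h a))).
    - exact: rp.
    - by case: (Hr (q (h a))).
  by move=> e; apply: nS'; rewrite e; case: (Hr (q b)).
have KC' : K C' by case: RC.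
have E := epi C' KC' (fun x => g' (q x)) (fun x => h' (q x)) (hom_comp hq hg') (hom_comp hq hh').
apply: nc0; have [x <-] := sq c0; apply: E => a; apply: ag; exact: T0S'.
Qed.

Theorem mainTheorem2 (sg : signature) (K : algebra sg -> Prop) :
  quasivariety K ->
  (weak_ES K <->
    (forall (B : algebra sg) (S : B -> Prop),
       fin_generated B -> full K S ->
       (exists th ph : B -> B -> Prop,
          [/\ K_congruence K th, K_congruence K ph, ~ rel_eq th ph &
              restr_eq S th ph])
       \/
       (exists (C : algebra sg) (g h : B -> C),
          [/\ RSI K C, is_embedding g, is_embedding h,
              (exists b, g b <> h b) &
              (forall a, S a -> g a = h a)])))
  /\
  (forall (B : algebra sg) (S : B -> Prop),
     fin_generated B -> full K S ->
     (exists th ph : B -> B -> Prop,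
        [/\ K_congruence K th, K_congruence K ph, ~ rel_eq th ph &
            restr_eq S th ph]) ->
     exists ph : B -> B -> Prop,
       [/\ K_congruence K ph, ~ rel_eq (@id_rel B) ph &
           restr_eq S (@id_rel B) ph]).
Proof.
move=> QK; split; first split.
- exact: fwd.
- exact: bwd.
- move=> B S _ fS H; exact: moreover QK fS H.
Qed.
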